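(* For every sparse paving matroid $M$, the basis pair graph $G(M)$ is connected.
   Context: A matroid $M$ of rank $r$ is sparse paving if every nonspanning circuit of $M$ is a hyperplane; equivalently, every $r$-element subset of $E(M)$ is either a basis or a circuit-hyperplane. The basis pair graph $G(M)$ has as vertices the ordered triples $(A_1,A_2,A_3)$ of subsets of $E(M)$ where $A_1$ and $A_2$ are disjoint bases of $M$ and $A_3=E(M)-(A_1\cup A_2)$ ($A_3$ need not be a basis). Two vertices $(A_1,A_2,A_3)$ and $(B_1,B_2,B_3)$ are adjacent if $|A_1-B_1|+|A_2-B_2|+|A_3-B_3|=2$, i.e., one is obtained from the other by switching a pair of elements lying in two different sets of the triple. (A graph with no vertices is regarded as connected.) *)

(* Defs.v *)
From mathcomp Require Import all_boot.
Set Implicit Arguments. Unset Strict Implicit. Unset Printing Implicit Defensive.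

Definition matroid_bases (T : finType) (B : {set {set T}}) : Prop :=
  B != set0 /\
  forall B1 B2 x, B1 \in B -> B2 \in B -> x \in B1 :\: B2 ->
    exists2 y, y \in B2 :\: B1 & (y |: (B1 :\ x)) \in B.

Section MatroidNotions.
Variables (T : finType) (B : {set {set T}}).

Definition indep (X : {set T}) : bool := [exists Y in B, X \subset Y].

Definition rk (X : {set T}) : nat :=
  \max_(Y : {set T} | indep Y && (Y \subset X)) #|Y|.

Definition mrank : nat := rk [set: T].

Definition spanning (X : {set T}) : bool := rk X == mrank.

Definition circuit (C : {set T}) : bool :=
  ~~ indep C && [forall x in C, indep (C :\ x)].

Definition flat (F : {set T}) : bool :=
  [forall x in ~: F, rk (x |: F) > rk F].

Definition hyperplane (H : {set T}) : bool :=
  flat H && (rk H == mrank.-1) && (rk H < mrank).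

Definition sparse_paving : Prop :=
  forall C, circuit C -> ~~ spanning C -> hyperplane C.

Definition triple := ({set T} * {set T} * {set T})%type.

Definition bpg_vertex (v : triple) : bool :=
  let: (A1, A2, A3) := v in
  [&& A1 \in B, A2 \in B, [disjoint A1 & A2] & A3 == ~: (A1 :|: A2)].

Definition bpg_adj (u v : triple) : bool :=
  let: (A1, A2, A3) := u in
  let: (B1, B2, B3) := v in
  #|A1 :\: B1| + #|A2 :\: B2| + #|A3 :\: B3| == 2.

Definition bpg_edge : rel triple :=
  fun u v => [&& bpg_vertex u, bpg_vertex v & bpg_adj u v].

Definition bpg_connected : Prop :=
  forall u v, bpg_vertex u -> bpg_vertex v -> connect bpg_edge u v.

End MatroidNotions.

(* Main.v *)
Require Import Defs.
From mathcomp Require Import all_boot.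
Set Implicit Arguments. Unset Strict Implicit. Unset Printing Implicit Defensive.

Lemma card_swap (T : finType) (A : {set T}) x y : x \in A -> y \notin A -> #|y |: (A :\ x)| = #|A|.
Proof.
move=> xA yA; rewrite cardsU1 inE negb_and yA orbT (cardsD1 x A) xA.
by [].
Qed.

Ltac rwh := repeat (match goal with
 | H : is_true (~~ (?a == ?b)) |- context [?b == ?a] => rewrite (eq_sym b a) (negbTE H)
 | H : is_true (~~ ?b) |- context [?b] => rewrite (negbTE H)
 | H : is_true ?b |- context [?b] => rewrite H
 end; simpl).

Ltac disj e := repeat match goal with
  | D : is_true [disjoint ?A & ?C] |- context [e \in ?A] =>
      let h := fresh "h" in case: (boolP (e \in A)) => h; [rewrite ?(disjointFr D h) | ]
  end.

Ltac fin e :=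
  disj e;
  repeat match goal with |- context [e == ?a] => let E := fresh "E" in case: (e =P a) => [E|_]; [subst e|] end;
  try (match goal with
   | H : is_true ?b, H' : is_true (~~ ?b) |- _ => by rewrite H in H'
   | H : is_true (~~ (?a == ?a)) |- _ => by rewrite eqxx in H
   end);
  rwh; rewrite ?eqxx /=;
  repeat match goal with |- context [?x \in ?S] => case: (x \in S) end;
  repeat match goal with |- context [?x == ?y] => case: (x == y) end; by [].

Ltac setx := let e := fresh "e" in apply/setP => e; rewrite ?inE; fin e.
Ltac subx := let e := fresh "e" in apply/subsetP => e; rewrite ?inE; apply/implyP; fin e.

Ltac memx := rewrite ?inE;
  try (match goal with | H : is_true ?b, H' : is_true (~~ ?b) |- _ => by rewrite H in H' end);
  rwh; rewrite ?eqxx /=;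
  repeat match goal with |- context [?x \in ?S] => case: (x \in S) end;
  repeat match goal with |- context [?x == ?y] => case: (x == y) end; by [].

Ltac setx_old := let e := fresh "e" in apply/setP => e; rewrite ?inE;
  repeat match goal with |- context [e == ?a] => let E := fresh "E" in case: (e =P a) => [E|_]; [subst e|] end;
  try (match goal with
   | H : is_true ?b, H' : is_true (~~ ?b) |- _ => by rewrite H in H'
   | H : is_true (~~ (?a == ?a)) |- _ => by rewrite eqxx in H
   end);
  rwh; rewrite ?eqxx /=;
  repeat match goal with |- context [?x \in ?S] => case: (x \in S) end;
  repeat match goal with |- context [?x == ?y] => case: (x == y) end; by [].

Section M.
Variables (T : finType) (B : {set {set T}}).
Hypothesis hM : matroid_bases B.

Lemma bases_le B1 B2 : B1 \in B -> B2 \in B -> #|B1| <= #|B2|.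
Proof.
move: {2}#|B1 :\: B2| (leqnn #|B1 :\: B2|) => n.
elim: n B1 => [|n IH] B1 Hn h1 h2.
  have : B1 \subset B2.
    apply/subsetP=> x xB; apply: contraTT Hn => xn; rewrite -ltnNge card_gt0.
    by apply/set0Pn; exists x; rewrite inE xn.
  exact: subset_leq_card.
case: (boolP (B1 \subset B2)) => [/subset_leq_card //|].
case/subsetPn => x xB1 xB2.
have [y /setDP [yB2 yB1] hb] := hM.2 B1 B2 x h1 h2 (introT setDP (conj xB1 xB2)).
rewrite -(card_swap xB1 yB1); apply: IH hb h2.
have e : (y |: (B1 :\ x)) :\: B2 = (B1 :\: B2) :\ x.
  by setx.
rewrite e; move: Hn; rewrite (cardsD1 x (B1 :\: B2)) inE xB2 xB1 /=.
by [].
Qed.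

Lemma bases_card B1 B2 : B1 \in B -> B2 \in B -> #|B1| = #|B2|.
Proof. by move=> h1 h2; apply/eqP; rewrite eqn_leq !bases_le. Qed.

Lemma indep_le I B0 : B0 \in B -> indep B I -> #|I| <= #|B0|.
Proof.
move=> h0 /existsP [Y /andP [hY sIY]].
by rewrite -(bases_card hY h0); apply: subset_leq_card.
Qed.

Lemma indep_eq I B0 : B0 \in B -> indep B I -> #|I| = #|B0| -> I \in B.
Proof.
move=> h0 /existsP [Y /andP [hY sIY]] hc.
suff -> : I = Y by [].
apply/eqP; rewrite eqEcard sIY /= hc (bases_card hY h0).
by [].
Qed.

Lemma indep0 : indep B set0.
Proof.
case: hM => /set0Pn [B0 h0] _; apply/existsP; exists B0; by rewrite h0 sub0set.
Qed.

Lemma rk_ge (I S : {set T}) : indep B I -> I \subset S -> #|I| <= rk B S.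
Proof. by move=> hI hS; apply: (leq_bigmax_cond (P := fun Y => indep B Y && (Y \subset S))); rewrite hI. Qed.

Lemma rk_wit (S : {set T}) : exists2 I, indep B I && (I \subset S) & rk B S = #|I|.
Proof.
have hp : 0 < #|[pred Y | indep B Y && (Y \subset S)]|.
  by apply/card_gt0P; exists set0; rewrite inE indep0 sub0set.
have [I hI e] := eq_bigmax_cond (fun Y : {set T} => #|Y|) hp.
by exists I; [move: hI; rewrite inE | exact: e].
Qed.


Lemma mrank_eq B0 : B0 \in B -> mrank B = #|B0|.
Proof.
move=> h0; apply/eqP; rewrite /mrank eqn_leq; apply/andP; split.
  have [I /andP [hI _] ->] := rk_wit setT; exact: indep_le h0 hI.
apply: rk_ge; last exact: subsetT.
by apply/existsP; exists B0; rewrite h0 subxx.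
Qed.

Hypothesis hS : sparse_paving B.

Lemma Qsw (B0 N : {set T}) (z w : T) : B0 \in B -> #|N| = #|B0| -> N \notin B -> z \in N -> w \notin N ->
  w |: (N :\ z) \in B.
Proof.
move=> h0 hN nNB zN wN.
have nNi : ~~ indep B N by apply: contra nNB => hi; apply: indep_eq h0 hi hN.
have hC : (N \subset N) && ~~ indep B N by rewrite subxx.
case: (@arg_minnP _ N (fun D : {set T} => (D \subset N) && ~~ indep B D) (fun D : {set T} => #|D|) hC) => C /andP [sCN dC] minC.
have circC : circuit B C.
  rewrite /circuit dC /=; apply/forallP => x; apply/implyP => xC.
  apply: contraT => dCx.
  have := minC (C :\ x); rewrite dCx andbT.
  have -> : C :\ x \subset N by apply: subset_trans sCN; apply: subsetDl.
  by rewrite (cardsD1 x C) xC /= => /(_ isT); rewrite ltnn.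
have nsp : ~~ spanning B C.
  rewrite /spanning (mrank_eq h0).
  have [I /andP [hI sIC] ->] := rk_wit C.
  apply/eqP => eI.
  have IB := indep_eq h0 hI eI.
  have : I == N by rewrite eqEcard (subset_trans sIC sCN) hN eI /=.
  by move/eqP => eIN; move: nNB; rewrite -eIN IB.
have /andP [/andP [flC rkC] _] := hS circC nsp.
rewrite (mrank_eq h0) in rkC.
have pos : 0 < #|B0| by rewrite -hN; apply/card_gt0P; exists z.
have eCN : C = N.
  apply/eqP; rewrite eqEcard sCN hN /=.
  have [I /andP [hI sIC] eI] := rk_wit C.
  have pIC : I \proper C.
    rewrite properEneq sIC andbT; apply: contra dC => /eqP <-; exact: hI.
  have := proper_card pIC; rewrite -eI (eqP rkC).
  by case: #|B0| pos.
subst C.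
have Zi : indep B (N :\ z) by move: circC => /andP [_ /forallP /(_ z) /implyP]; apply.
have cZ : #|N :\ z| = #|B0|.-1 by rewrite -hN (cardsD1 z N) zN.
(* flatness gives a basis I inside w |: N *)
have [I IB sIwN] : exists2 I, I \in B & I \subset w |: N.
  have := (forallP flC) w; rewrite inE wN /= => hlt.
  have h1 : #|B0|.-1 <= rk B N by rewrite -cZ; apply: rk_ge Zi (subsetDl _ _).
  have [I /andP [hI sI] eI] := rk_wit (w |: N).
  exists I => //; apply: (indep_eq h0 hI).
  apply/eqP; rewrite eqn_leq (indep_le h0 hI) /= -eI.
  move: (leq_ltn_trans h1 hlt); by case: #|B0| pos.
case/existsP: Zi => B1 /andP [hB1 sZB1].
have cB1 : #|B1| = #|B0| := bases_card hB1 h0.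
have [t tB1 tZ] : exists2 t, t \in B1 & t \notin N :\ z.
  apply/subsetPn; apply: contraTN isT => sB1Z.
  have := subset_leq_card sB1Z; rewrite cZ cB1.
  by case: #|B0| pos => // n _; rewrite ltnn.
have eB1 : B1 = t |: (N :\ z).
  apply/eqP; rewrite eq_sym eqEcard cardsU1 tZ cZ cB1.
  have -> : t |: (N :\ z) \subset B1 by rewrite subUset sub1set tB1 sZB1.
  by rewrite /= add1n prednK.
case: (t =P w) => [etw|ntw]; first by rewrite -etw -eB1.
case: (t =P z) => [etz|ntz].
  have eN : N = B1 by rewrite eB1 etz setD1K.
  by move: nNB; rewrite eN hB1.
have tI : t \notin I.
  apply/negP => /(subsetP sIwN); rewrite !inE; move: tZ; rewrite !inE.
  by move/eqP: ntw => /negbTE ->; move/eqP: ntz => -> /= /negP.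
have [s /setDP [sI sB1] hs] := hM.2 B1 I t hB1 IB (introT setDP (conj tB1 tI)).
have eZ : B1 :\ t = N :\ z by rewrite eB1 setU1K.
rewrite eZ in hs.
move: (subsetP sIwN s sI); rewrite !inE => /orP [hsw|sN]; first by rewrite -(eqP hsw).
case: (s =P z) => [esz|nsz].
  have eN : N = s |: (N :\ z) by rewrite esz setD1K.
  by move: nNB; rewrite {1}eN hs.
by move: sB1; rewrite eB1 !inE sN; move/eqP: nsz => /negbTE -> /=; rewrite orbT.
Qed.

End M.

Section G.
Variables (T : finType) (B : {set {set T}}).
Hypothesis hM : matroid_bases B.
Hypothesis hS : sparse_paving B.

Definition vx (A1 A2 : {set T}) : triple T := (A1, A2, ~: (A1 :|: A2)).
Definition V (A1 A2 : {set T}) := [&& A1 \in B, A2 \in B & [disjoint A1 & A2]].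

Lemma neqm (A : {set T}) a b : a \in A -> b \notin A -> a != b.
Proof. by move=> ha hb; apply: contraNneq hb => <-. Qed.

Lemma edge_of A1 A2 A1' A2' : V A1 A2 -> V A1' A2' ->
  #|A1 :\: A1'| + #|A2 :\: A2'| + #|~:(A1:|:A2) :\: ~:(A1':|:A2')| == 2 ->
  connect (bpg_edge B) (vx A1 A2) (vx A1' A2').
Proof.
move=> /and3P [h1 h2 h3] /and3P [h1' h2' h3'] ha; apply: connect1.
by rewrite /bpg_edge /bpg_vertex /bpg_adj /vx h1 h2 h3 h1' h2' h3' !eqxx ha.
Qed.

Lemma mv12 A1 A2 x y : V A1 A2 -> x \in A1 -> y \in A2 ->
  y |: (A1 :\ x) \in B -> x |: (A2 :\ y) \in B ->
  V (y |: (A1 :\ x)) (x |: (A2 :\ y)) /\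
  connect (bpg_edge B) (vx A1 A2) (vx (y |: (A1 :\ x)) (x |: (A2 :\ y))).
Proof.
move=> hV xA1 yA2 b1 b2.
have /and3P [_ _ D] := hV.
have xA2 : x \notin A2 by rewrite (disjointFr D xA1).
have yA1 : y \notin A1 by rewrite (disjointFl D yA2).
have xy : x != y by apply: neqm xA1 yA1.
have hV' : V (y |: (A1 :\ x)) (x |: (A2 :\ y)).
  rewrite /V b1 b2 -setI_eq0; apply/eqP; setx.
split => //; apply: edge_of hV hV' _.
have -> : A1 :\: (y |: (A1 :\ x)) = [set x] by setx.
have -> : A2 :\: (x |: (A2 :\ y)) = [set y] by setx.
have -> : ~: (A1 :|: A2) :\: ~: ((y |: (A1 :\ x)) :|: (x |: (A2 :\ y))) = set0 by setx.
by rewrite !cards1 cards0.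
Qed.

Lemma mv13 A1 A2 x y : V A1 A2 -> x \in A1 -> y \notin A1 -> y \notin A2 ->
  y |: (A1 :\ x) \in B ->
  V (y |: (A1 :\ x)) A2 /\ connect (bpg_edge B) (vx A1 A2) (vx (y |: (A1 :\ x)) A2).
Proof.
move=> hV xA1 yA1 yA2 b1.
have /and3P [_ b2 D] := hV.
have xA2 : x \notin A2 by rewrite (disjointFr D xA1).
have xy : x != y by apply: neqm xA1 yA1.
have hV' : V (y |: (A1 :\ x)) A2.
  rewrite /V b1 b2 -setI_eq0; apply/eqP; setx.
split => //; apply: edge_of hV hV' _.
have -> : A1 :\: (y |: (A1 :\ x)) = [set x] by setx.
have -> : A2 :\: A2 = set0 by setx.
have -> : ~: (A1 :|: A2) :\: ~: ((y |: (A1 :\ x)) :|: A2) = [set y] by setx.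
by rewrite !cards1 cards0.
Qed.

Lemma mv23 A1 A2 x y : V A1 A2 -> x \in A2 -> y \notin A1 -> y \notin A2 ->
  y |: (A2 :\ x) \in B ->
  V A1 (y |: (A2 :\ x)) /\ connect (bpg_edge B) (vx A1 A2) (vx A1 (y |: (A2 :\ x))).
Proof.
move=> hV xA2 yA1 yA2 b2.
have /and3P [b1 _ D] := hV.
have xA1 : x \notin A1 by rewrite (disjointFl D xA2).
have xy : x != y by apply: neqm xA2 yA2.
have hV' : V A1 (y |: (A2 :\ x)).
  rewrite /V b1 b2 -setI_eq0; apply/eqP; setx.
split => //; apply: edge_of hV hV' _.
have -> : A2 :\: (y |: (A2 :\ x)) = [set x] by setx.
have -> : A1 :\: A1 = set0 by setx.
have -> : ~: (A1 :|: A2) :\: ~: (A1 :|: (y |: (A2 :\ x))) = [set y] by setx.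
by rewrite !cards1 cards0.
Qed.

Lemma Qs A x y z w : A \in B -> x \in A -> y \notin A -> y |: (A :\ x) \notin B ->
  z \in y |: (A :\ x) -> w \notin y |: (A :\ x) -> w |: ((y |: (A :\ x)) :\ z) \in B.
Proof.
move=> hA xA yA nB zN wN; apply: (Qsw hM hS hA) => //.
exact: card_swap.
Qed.

Lemma cardD_sym (A C : {set T}) : #|A| = #|C| -> #|A :\: C| = #|C :\: A|.
Proof. by move=> h; rewrite !cardsD setIC h. Qed.

Section Target.
Variables B1 B2 : {set T}.
Hypothesis hVB : V B1 B2.

Definition reach A1 A2 := exists A1' A2', [/\ V A1' A2',
  connect (bpg_edge B) (vx A1 A2) (vx A1' A2') & #|A1' :\: B1| < #|A1 :\: B1|].

Lemma mu_dec (A1 A' : {set T}) x : x \in A1 -> x \notin B1 ->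
  A' :\: B1 \subset (A1 :\: B1) :\ x -> #|A' :\: B1| < #|A1 :\: B1|.
Proof.
move=> xA xB h; apply: leq_ltn_trans (subset_leq_card h) _.
by rewrite (cardsD1 x (A1 :\: B1)) inE xB xA.
Qed.

Lemma case_i A1 A2 x0 y : V A1 A2 -> x0 \in A1 -> x0 \notin B1 -> y \in B1 ->
  y \notin A1 -> y \notin A2 -> reach A1 A2.
Proof.
move=> hV x0A x0B yB yA1 yA2.
have /and3P [b1 b2 D] := hV.
have /and3P [hB1 hB2 DB] := hVB.
have H : forall x, x \in A1 -> x \notin B1 -> y |: (A1 :\ x) \in B -> reach A1 A2.
  move=> x xA xB bS; have [hV' c] := mv13 hV xA yA1 yA2 bS.
  exists (y |: (A1 :\ x)), A2; split => //; apply: (mu_dec xA xB).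
  have xy : x != y by apply: neqm xA yA1.
  subx.
case: (boolP (y |: (A1 :\ x0) \in B)) => bS; first exact: H bS.
have [e eS eB] : exists2 e, e \in y |: (A1 :\ x0) & e \notin B1.
  apply/subsetPn; apply: contra bS => sub.
  have : y |: (A1 :\ x0) == B1.
    by rewrite eqEcard sub card_swap // (bases_card hM b1 hB1) leqnn.
  by move/eqP ->.
move: eS; rewrite !inE => /orP [/eqP eY|/andP [ex eA]].
  by subst e; rewrite yB in eB.
apply: (H e eA eB).
have x0y : x0 != y by apply: neqm x0A yA1.
have ey : e != y by apply: neqm eA yA1.
have -> : y |: (A1 :\ e) = x0 |: ((y |: (A1 :\ x0)) :\ e) by setx.
apply: Qs => //; memx.
Qed.

Lemma pathA A1 A2 x0 x1 y0 y1 : V A1 A2 -> x0 \in A1 -> x1 \in A1 -> x0 \notin B1 ->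
  x1 \notin B1 -> x0 != x1 -> y0 \in A2 -> y1 \in A2 -> y0 \in B1 -> y1 \in B1 ->
  y0 != y1 ->
  y0 |: (A1 :\ x0) \notin B -> x0 |: (A2 :\ y1) \notin B -> x1 |: (A2 :\ y0) \notin B ->
  reach A1 A2.
Proof.
move=> hV x0A x1A x0B x1B x01 y0A y1A y0B y1B y01 N1 N2 N3.
have /and3P [b1 b2 D] := hV.
have /and3P [hB1 hB2 DB] := hVB.
have x0A2 : x0 \notin A2 by rewrite (disjointFr D x0A).
have x1A2 : x1 \notin A2 by rewrite (disjointFr D x1A).
have y0A1 : y0 \notin A1 by rewrite (disjointFl D y0A).
have y1A1 : y1 \notin A1 by rewrite (disjointFl D y1A).
have x0y0 : x0 != y0 by apply: neqm x0A y0A1.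
have x0y1 : x0 != y1 by apply: neqm x0A y1A1.
have x1y0 : x1 != y0 by apply: neqm x1A y0A1.
have x1y1 : x1 != y1 by apply: neqm x1A y1A1.
have [d dA2 /andP [dy0 dy1]] : exists2 d, d \in A2 & (d != y0) && (d != y1).
  case: (boolP (A2 \subset [set y0; y1])) => [sub | /subsetPn [d dA2 dn]]; last first.
    by exists d => //; move: dn; rewrite !inE negb_or.
  exfalso.
  have c2 : #|A2| = #|A1| by apply: (bases_card hM b2 b1).
  have eA2 : A2 = [set y0; y1].
    apply/eqP; rewrite eqEcard sub /=; apply: subset_leq_card.
    by rewrite subUset !sub1set y0A y1A.
  have eA1 : A1 = [set x0; x1].
    apply/eqP; rewrite eq_sym eqEcard subUset !sub1set x0A x1A /= -c2 eA2 !cards2 x01 y01.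
    by [].
  have := @Qs A2 y1 x0 x0 x1 b2 y1A x0A2 N2.
  have -> : x1 |: ((x0 |: (A2 :\ y1)) :\ x0) = y0 |: (A1 :\ x0).
    rewrite eA1 eA2; setx.
  have h1 : x0 \in x0 |: (A2 :\ y1) by memx.
  have h2 : x1 \notin x0 |: (A2 :\ y1) by memx.
  by move=> /(_ h1 h2); rewrite (negbTE N1).
have dA1 : d \notin A1 by rewrite (disjointFl D dA2).
have dx0 : d != x0 by apply: neqm dA2 x0A2.
have dx1 : d != x1 by apply: neqm dA2 x1A2.
have bP1 : d |: (A1 :\ x0) \in B.
  have -> : d |: (A1 :\ x0) = d |: ((y0 |: (A1 :\ x0)) :\ y0) by setx.
  by apply: Qs => //; memx.
have bQ1 : x0 |: (A2 :\ d) \in B.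
  have -> : x0 |: (A2 :\ d) = y1 |: ((x0 |: (A2 :\ y1)) :\ d) by setx.
  by apply: Qs => //; memx.
have [hV1 c1] := mv12 hV x0A dA2 bP1 bQ1.
have m1 : x1 \in d |: (A1 :\ x0) by memx.
have m2 : y0 \in x0 |: (A2 :\ d) by memx.
have bP2 : y0 |: ((d |: (A1 :\ x0)) :\ x1) \in B.
  have -> : y0 |: ((d |: (A1 :\ x0)) :\ x1) = d |: ((y0 |: (A1 :\ x0)) :\ x1) by setx.
  by apply: Qs => //; memx.
have bQ2 : x1 |: ((x0 |: (A2 :\ d)) :\ y0) \in B.
  have -> : x1 |: ((x0 |: (A2 :\ d)) :\ y0) = x0 |: ((x1 |: (A2 :\ y0)) :\ d) by setx.
  by apply: Qs => //; memx.
have [hV2 c2] := mv12 hV1 m1 m2 bP2 bQ2.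
have m3 : d \in y0 |: ((d |: (A1 :\ x0)) :\ x1) by memx.
have m4 : y1 \in x1 |: ((x0 |: (A2 :\ d)) :\ y0) by memx.
have bP3 : y1 |: ((y0 |: ((d |: (A1 :\ x0)) :\ x1)) :\ d) \in B.
  have -> : y1 |: ((y0 |: ((d |: (A1 :\ x0)) :\ x1)) :\ d) = y1 |: ((y0 |: (A1 :\ x0)) :\ x1) by setx.
  by apply: Qs => //; memx.
have bQ3 : d |: ((x1 |: ((x0 |: (A2 :\ d)) :\ y0)) :\ y1) \in B.
  have -> : d |: ((x1 |: ((x0 |: (A2 :\ d)) :\ y0)) :\ y1) = x1 |: ((x0 |: (A2 :\ y1)) :\ y0) by setx.
  by apply: Qs => //; memx.
have [hV3 c3] := mv12 hV2 m3 m4 bP3 bQ3.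
eexists; eexists; split; first exact: hV3.
  exact: connect_trans c1 (connect_trans c2 c3).
apply: (mu_dec x0A x0B); subx.
Qed.

Lemma reach_pre A1 A2 A2' : V A1 A2' -> connect (bpg_edge B) (vx A1 A2) (vx A1 A2') ->
  reach A1 A2' -> reach A1 A2.
Proof.
move=> _ c [A1'' [A2'' [h c' m]]]; exists A1'', A2''; split => //.
exact: connect_trans c c'.
Qed.

Lemma step A1 A2 x0 : V A1 A2 -> x0 \in A1 -> x0 \notin B1 -> reach A1 A2.
Proof.
move=> hV x0A x0B.
have /and3P [b1 b2 D] := hV.
have /and3P [hB1 hB2 DB] := hVB.
have cA1 : #|A1| = #|B1| := bases_card hM b1 hB1.
have cA2 : #|A2| = #|B1| := bases_card hM b2 hB1.
have cB2 : #|B2| = #|B1| := bases_card hM hB2 hB1.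
case: (boolP [exists y, [&& y \in B1, y \notin A1 & y \notin A2]]) =>
  [/existsP [y /and3P [yB yA1 yA2]] | hno].
  exact: (case_i hV x0A x0B yB yA1 yA2).
have HY : forall y, y \in B1 -> y \notin A1 -> y \in A2.
  move=> y h1 h2; apply: contraNT hno => h3; apply/existsP; exists y; by rewrite h1 h2 h3.
have [y0 y0B y0A] : exists2 y0, y0 \in B1 & y0 \notin A1.
  apply/subsetPn; apply/negP => sub.
  have : B1 == A1 by rewrite eqEcard sub cA1 leqnn.
  by move/eqP => e; move: x0B; rewrite e x0A.
have y0A2 := HY y0 y0B y0A.
have x0y0 : x0 != y0 by apply: neqm x0A y0A.
case: (boolP [exists x, [&& x \in A1, x \notin B1 & x != x0]]) =>
  [/existsP [x1 /and3P [x1A x1B x10]] | hnx].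
  have [y1 y1in] : exists y1, y1 \in (B1 :\: A1) :\ y0.
    apply/card_gt0P.
    have h2 : 1 < #|A1 :\: B1|.
      by apply/card_gt1P; exists x1, x0; rewrite !inE x1A x1B x0A x0B x10.
    move: h2; rewrite (cardD_sym cA1) (cardsD1 y0 (B1 :\: A1)) inE y0A y0B /=.
    by [].
  move: y1in; rewrite !inE => /andP [y10 /andP [y1A y1B]].
  have y1A2 := HY y1 y1B y1A.
  have x01 : x0 != x1 by rewrite eq_sym.
  have y01 : y0 != y1 by rewrite eq_sym.
  have x0A2 : x0 \notin A2 by rewrite (disjointFr D x0A).
  have x1A2 : x1 \notin A2 by rewrite (disjointFr D x1A).
  have x0y1 : x0 != y1 by apply: neqm x0A y1A.
  have x1y0 : x1 != y0 by apply: neqm x1A y0A.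
  have x1y1 : x1 != y1 by apply: neqm x1A y1A.
  have direct : forall x y, x \in A1 -> x \notin B1 -> y \in A2 -> y \in B1 ->
      y |: (A1 :\ x) \in B -> x |: (A2 :\ y) \in B -> reach A1 A2.
    move=> x y xA xB yA yB s t.
    have [hV' c] := mv12 hV xA yA s t.
    exists (y |: (A1 :\ x)), (x |: (A2 :\ y)); split => //.
    apply: (mu_dec xA xB).
    have yA1 : y \notin A1 by rewrite (disjointFl D yA).
    have xy : x != y by apply: neqm xA yA1.
    subx.
  case: (boolP (y0 |: (A1 :\ x0) \in B)) => s00.
    case: (boolP (x0 |: (A2 :\ y0) \in B)) => t00.
      exact: direct x0A x0B y0A2 y0B s00 t00.
    have t01 : x0 |: (A2 :\ y1) \in B.
      have -> : x0 |: (A2 :\ y1) = y0 |: ((x0 |: (A2 :\ y0)) :\ y1) by setx.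
      by apply: Qs => //; memx.
    have t10 : x1 |: (A2 :\ y0) \in B.
      have -> : x1 |: (A2 :\ y0) = x1 |: ((x0 |: (A2 :\ y0)) :\ x0) by setx.
      by apply: Qs => //; memx.
    case: (boolP (y1 |: (A1 :\ x0) \in B)) => s01.
      exact: direct x0A x0B y1A2 y1B s01 t01.
    case: (boolP (y0 |: (A1 :\ x1) \in B)) => s10.
      exact: direct x1A x1B y0A2 y0B s10 t10.
    have s11 : y1 |: (A1 :\ x1) \in B.
      have -> : y1 |: (A1 :\ x1) = y1 |: ((y0 |: (A1 :\ x1)) :\ y0) by setx.
      by apply: Qs => //; memx.
    case: (boolP (x1 |: (A2 :\ y1) \in B)) => t11.
      exact: direct x1A x1B y1A2 y1B s11 t11.
    by apply: (pathA hV x0A x1A x0B x1B x01 y1A2 y0A2 y1B y0B _ s01 t00 t11); rewrite eq_sym.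
  have s01 : y1 |: (A1 :\ x0) \in B.
    have -> : y1 |: (A1 :\ x0) = y1 |: ((y0 |: (A1 :\ x0)) :\ y0) by setx.
    by apply: Qs => //; memx.
  have s10 : y0 |: (A1 :\ x1) \in B.
    have -> : y0 |: (A1 :\ x1) = x0 |: ((y0 |: (A1 :\ x0)) :\ x1) by setx.
    by apply: Qs => //; memx.
  case: (boolP (x0 |: (A2 :\ y1) \in B)) => t01.
    exact: direct x0A x0B y1A2 y1B s01 t01.
  case: (boolP (x1 |: (A2 :\ y0) \in B)) => t10.
    exact: direct x1A x1B y0A2 y0B s10 t10.
  exact: (pathA hV x0A x1A x0B x1B x01 y0A2 y1A2 y0B y1B y01 s00 t01 t10).
have HX : forall x, x \in A1 -> x \notin B1 -> x = x0.
  move=> x h1 h2; apply/eqP; apply: contraNT hnx => h3; apply/existsP; exists x; by rewrite h1 h2 h3.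
have eS : y0 |: (A1 :\ x0) = B1.
  apply/eqP; rewrite eqEcard card_swap // cA1 leqnn andbT.
  apply/subsetP => e; rewrite !inE => /orP [/eqP -> //|/andP [ex eA]].
  apply: contraNT ex => eB; by rewrite (HX e eA eB) eqxx.
have s00 : y0 |: (A1 :\ x0) \in B by rewrite eS.
have x0A2 : x0 \notin A2 by rewrite (disjointFr D x0A).
case: (boolP (x0 |: (A2 :\ y0) \in B)) => t00.
  have [hV' c] := mv12 hV x0A y0A2 s00 t00.
  exists (y0 |: (A1 :\ x0)), (x0 |: (A2 :\ y0)); split => //.
  apply: (mu_dec x0A x0B); subx.
case: (boolP [exists z, (z \notin A1) && (z \notin A2)]) => [/existsP [z /andP [zA1 zA2]] | hnz].
  have zx0 : z != x0 by rewrite eq_sym; apply: neqm x0A zA1.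
  have zy0 : z != y0 by rewrite eq_sym; apply: neqm y0A2 zA2.
  have bA2 : z |: (A2 :\ y0) \in B.
    have -> : z |: (A2 :\ y0) = z |: ((x0 |: (A2 :\ y0)) :\ x0) by setx.
    by apply: Qs => //; memx.
  have [hV' c] := mv23 hV y0A2 zA1 zA2 bA2.
  apply: (reach_pre hV' c).
  apply: (case_i hV' x0A x0B y0B y0A); memx.
exfalso; move: t00; apply/negP; rewrite negbK.
suff -> : x0 |: (A2 :\ y0) = B2 by [].
apply/eqP; rewrite eq_sym eqEcard card_swap // cA2 cB2 leqnn andbT.
apply/subsetP => e eB2.
have eB1 : e \notin B1 by rewrite (disjointFl DB eB2).
rewrite !inE.
case: (boolP (e \in A1)) => eA1.
  by rewrite (HX e eA1 eB1) eqxx.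
have eA2 : e \in A2.
  apply: contraNT hnz => h; apply/existsP; exists e; by rewrite eA1 h.
have ey0 : e != y0 by apply: contraNneq eB1 => ->.
by rewrite ey0 eA2 orbT.
Qed.

Lemma phase2 n A2 : #|A2 :\: B2| <= n -> V B1 A2 -> connect (bpg_edge B) (vx B1 A2) (vx B1 B2).
Proof.
have /and3P [hB1 hB2 DB] := hVB.
elim: n A2 => [|n IH] A2 hn hV; have /and3P [_ b2 D] := hV.
  have : A2 :\: B2 = set0 by apply/eqP; rewrite -cards_eq0 -leqn0.
  move/eqP; rewrite setD_eq0 => sub.
  have -> : A2 = B2.
    by apply/eqP; rewrite eqEcard sub (bases_card hM hB2 b2) leqnn.
  exact: connect0.
case: (boolP (A2 \subset B2)) => sub.
  have -> : A2 = B2.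
    by apply/eqP; rewrite eqEcard sub (bases_card hM hB2 b2) leqnn.
  exact: connect0.
case/subsetPn: sub => x xA2 xB2.
have [y /setDP [yB2 yA2] hb] := hM.2 A2 B2 x b2 hB2 (introT setDP (conj xA2 xB2)).
have yB1 : y \notin B1 by rewrite (disjointFl DB yB2).
have [hV' c] := mv23 hV xA2 yB1 yA2 hb.
apply: connect_trans c (IH _ _ hV').
have xy : x != y by apply: neqm xA2 yA2.
have e : (y |: (A2 :\ x)) :\: B2 = (A2 :\: B2) :\ x by setx.
rewrite e; move: hn; rewrite (cardsD1 x (A2 :\: B2)) inE xB2 xA2 /=.
by [].
Qed.

Lemma phase1 n A1 A2 : #|A1 :\: B1| <= n -> V A1 A2 -> connect (bpg_edge B) (vx A1 A2) (vx B1 B2).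
Proof.
have /and3P [hB1 hB2 DB] := hVB.
elim: n A1 A2 => [|n IH] A1 A2 hn hV; have /and3P [b1 b2 D] := hV.
  have : A1 :\: B1 = set0 by apply/eqP; rewrite -cards_eq0 -leqn0.
  move/eqP; rewrite setD_eq0 => sub.
  have e : A1 = B1.
    by apply/eqP; rewrite eqEcard sub (bases_card hM hB1 b1) leqnn.
  subst A1; exact: (phase2 (leqnn _) hV).
case: (boolP (A1 \subset B1)) => sub.
  have e : A1 = B1.
    by apply/eqP; rewrite eqEcard sub (bases_card hM hB1 b1) leqnn.
  subst A1; exact: (phase2 (leqnn _) hV).
case/subsetPn: sub => x xA1 xB1.
have [A1' [A2' [hV' c m]]] := step hV xA1 xB1.
apply: connect_trans c (IH _ _ _ hV').
by rewrite -ltnS; apply: leq_trans m hn.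
Qed.

End Target.

End G.

Theorem theorem2p3 (T : finType) (B : {set {set T}}) :
  matroid_bases B -> sparse_paving B -> bpg_connected B.
Proof.
move=> hM hS [[A1 A2] A3] [[B1 B2] B3] hu hv.
have /and4P [a1 a2 aD /eqP a3] := hu.
have /and4P [c1 c2 cD /eqP c3] := hv.
subst A3 B3.
have hVB : V B B1 B2 by rewrite /V c1 c2 cD.
have hVA : V B A1 A2 by rewrite /V a1 a2 aD.
exact: (phase1 hM hS hVB (leqnn _) hVA).
Qed.
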